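(* Let $b\in\mathbb{R}\setminus\{0\}$ and let $\nu_1,\nu_2:\mathbb{R}^2\to\mathbb{R}$ be smooth functions of $(j,t)$ with $\nu_2(0,0)=0$ and $$\nu_1(0,0)=0,\qquad \frac{\partial \nu_1}{\partial j}(0,0)=0,\qquad \frac{\partial^2 \nu_1}{\partial j^2}(0,0)\neq 0,\qquad \frac{\partial \nu_1}{\partial t}(0,0)\neq 0.$$ Define $\mathrm{disc}_b(j,t):=\nu_2(j,t)^2-4b\,\nu_1(j,t)$. Then the saddle-node bifurcations associated to $\nu_1$ and $\mathrm{disc}_b$ are concave in the same direction if $$\frac{1}{2b}\,\frac{\left(\frac{\partial \nu_2}{\partial j}(0,0)\right)^2}{\frac{\partial^2 \nu_1}{\partial j^2}(0,0)}<1 .$$ If the inequality is reversed, they are concave in opposite directions. If equality holds, the double flip bifurcation is degenerate, i.e. $\frac{\partial^2 \mathrm{disc}_b}{\partial j^2}(0,0)=0$.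
   Context: For a smooth function $g(j,t)$ with $g(0,0)=0$, $\partial_j g(0,0)=0$, $\partial_j^2 g(0,0)\neq 0$, $\partial_t g(0,0)\neq 0$ (the conditions for the ODE $dj/dt=g(j,t)$ to undergo a saddle-node bifurcation at the origin), the zero set $\{g=0\}$ near the origin is a curve $t=\gamma(j)$ of parabolic shape with $\gamma(0)=\gamma'(0)=0$; the associated saddle-node bifurcation is called concave up if $\partial_j^2 g(0,0)\,\partial_t g(0,0)<0$ and concave down if $\partial_j^2 g(0,0)\,\partial_t g(0,0)>0$. One has $\partial_j \mathrm{disc}_b(0,0)=0$ and $\partial_t\mathrm{disc}_b(0,0)=-4b\,\partial_t\nu_1(0,0)\neq0$, so $\mathrm{disc}_b$ satisfies the saddle-node conditions exactly when $\partial_j^2\mathrm{disc}_b(0,0)=2(\partial_j\nu_2(0,0))^2-4b\,\partial_j^2\nu_1(0,0)\neq0$; the double flip bifurcation (of the Hamiltonian $H_{j,t}(q,p)=\frac{a}{2}p^2+\frac{b}{6}q^6+\frac{\nu_1(j,t)}{2}q^2+\frac{\nu_2(j,t)}{4}q^4$) is called non-degenerate if this quantity is non-zero and degenerate otherwise. *)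

(* Defs.v *)
From Stdlib Require Import Reals.
From Coquelicot Require Import Coquelicot.
Open Scope R_scope.

Definition dj (g : R -> R -> R) : R -> R -> R :=
  fun j t => Derive (fun x => g x t) j.
Definition dt (g : R -> R -> R) : R -> R -> R :=
  fun j t => Derive (fun y => g j y) t.

Fixpoint Cn (n : nat) (g : R -> R -> R) : Prop :=
  match n with
  | O => forall j t, continuity_2d_pt g j t
  | S m =>
      (forall j t, continuity_2d_pt g j t) /\
      (forall j t, ex_derive (fun x => g x t) j /\ ex_derive (fun y => g j y) t) /\
      Cn m (dj g) /\ Cn m (dt g)
  end.

Definition smooth2 (g : R -> R -> R) : Prop := forall n, Cn n g.

Definition saddle_node (g : R -> R -> R) : Prop :=
  g 0 0 = 0 /\ dj g 0 0 = 0 /\ dj (dj g) 0 0 <> 0 /\ dt g 0 0 <> 0.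

Definition concave_up (g : R -> R -> R) : Prop :=
  saddle_node g /\ dj (dj g) 0 0 * dt g 0 0 < 0.
Definition concave_down (g : R -> R -> R) : Prop :=
  saddle_node g /\ dj (dj g) 0 0 * dt g 0 0 > 0.

Definition same_direction (g h : R -> R -> R) : Prop :=
  (concave_up g /\ concave_up h) \/ (concave_down g /\ concave_down h).
Definition opposite_direction (g h : R -> R -> R) : Prop :=
  (concave_up g /\ concave_down h) \/ (concave_down g /\ concave_up h).

Definition discb (b : R) (nu1 nu2 : R -> R -> R) : R -> R -> R :=
  fun j t => (nu2 j t) ^ 2 - 4 * b * nu1 j t.

(* Main.v *)
Require Import Defs.
From Stdlib Require Import Reals Lra Psatz.
From Coquelicot Require Import Coquelicot.
Open Scope R_scope.
Lemma gen (b j : R) (f g h : R -> R) :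
  ex_derive f j -> ex_derive g j -> ex_derive h j ->
  Derive (fun x => 2 * f x * g x - 4 * b * h x) j =
  2 * (Derive f j * g j + f j * Derive g j) - 4 * b * Derive h j.
Proof.
  intros. apply is_derive_unique. auto_derive.
  - repeat split; auto.
  - change (fun x => f x) with f; change (fun x => g x) with g; change (fun x => h x) with h; rewrite !Rmult_1_l; unfold Rminus; ring_simplify; reflexivity.
Qed.



Lemma dj_disc b nu1 nu2 :
  (forall j t, ex_derive (fun x => nu1 x t) j) ->
  (forall j t, ex_derive (fun x => nu2 x t) j) ->
  forall j t, dj (discb b nu1 nu2) j t = 2 * nu2 j t * dj nu2 j t - 4 * b * dj nu1 j t.
Proof.
  intros H1 H2 j t. unfold dj, discb.
  apply is_derive_unique. auto_derive.
  - split; [apply H2|split;[apply H1|exact I]].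
  - ring.
Qed.

Lemma dt_disc b nu1 nu2 :
  (forall j t, ex_derive (fun y => nu1 j y) t) ->
  (forall j t, ex_derive (fun y => nu2 j y) t) ->
  forall j t, dt (discb b nu1 nu2) j t = 2 * nu2 j t * dt nu2 j t - 4 * b * dt nu1 j t.
Proof.
  intros H1 H2 j t. unfold dt, discb.
  apply is_derive_unique. auto_derive.
  - split; [apply H2|split;[apply H1|exact I]].
  - ring.
Qed.

Lemma sm_dj (g : R -> R -> R) : smooth2 g -> forall j t, ex_derive (fun x => g x t) j.
Proof. intros H j t. pose proof (H 1%nat) as H1. simpl in H1. destruct H1 as [_ [H1 _]]. exact (proj1 (H1 j t)). Qed.
Lemma sm_dt (g : R -> R -> R) : smooth2 g -> forall j t, ex_derive (fun y => g j y) t.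
Proof. intros H j t. pose proof (H 1%nat) as H1. simpl in H1. destruct H1 as [_ [H1 _]]. exact (proj2 (H1 j t)). Qed.
Lemma sm_djdj (g : R -> R -> R) : smooth2 g -> forall j t, ex_derive (fun x => dj g x t) j.
Proof. intros H j t. pose proof (H 2%nat) as H1. simpl in H1. destruct H1 as [_ [_ [H1 _]]]. destruct H1 as [_ [H1 _]]. exact (proj1 (H1 j t)). Qed.

Theorem theorem4p2 (b : R) (nu1 nu2 : R -> R -> R) :
  b <> 0 ->
  smooth2 nu1 -> smooth2 nu2 ->
  nu2 0 0 = 0 ->
  nu1 0 0 = 0 -> dj nu1 0 0 = 0 -> dj (dj nu1) 0 0 <> 0 -> dt nu1 0 0 <> 0 ->
  let q := / (2 * b) * ((dj nu2 0 0) ^ 2 / dj (dj nu1) 0 0) in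
  (q < 1 -> same_direction nu1 (discb b nu1 nu2)) /\
  (q > 1 -> opposite_direction nu1 (discb b nu1 nu2)) /\
  (q = 1 -> dj (dj (discb b nu1 nu2)) 0 0 = 0).
Proof.
  intros Hb S1 S2 H20 H10 H1j H1jj H1t q.
  pose proof (dj_disc b nu1 nu2 (sm_dj _ S1) (sm_dj _ S2)) as DJ.
  assert (DT : dt (discb b nu1 nu2) 0 0 = - 4 * b * dt nu1 0 0).
  { rewrite (dt_disc b nu1 nu2 (sm_dt _ S1) (sm_dt _ S2)), H20. ring. }
  assert (DJJ : dj (dj (discb b nu1 nu2)) 0 0 = 2 * (dj nu2 0 0)^2 - 4 * b * dj (dj nu1) 0 0).
  { unfold dj at 1.
    rewrite (Derive_ext _ (fun x => 2 * nu2 x 0 * dj nu2 x 0 - 4 * b * dj nu1 x 0))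
      by (intros; apply DJ).
    rewrite gen; [| apply (sm_dj _ S2) | apply (sm_djdj _ S2) | apply (sm_djdj _ S1)].
    rewrite H20. unfold dj. ring. }
  assert (D0 : discb b nu1 nu2 0 0 = 0) by (unfold discb; rewrite H20, H10; ring).
  assert (DJ0 : dj (discb b nu1 nu2) 0 0 = 0) by (rewrite DJ, H20, H1j; ring).
  set (a := dj nu2 0 0) in *. set (c := dj (dj nu1) 0 0) in *. set (d := dt nu1 0 0) in *.
  assert (KEY : dj (dj (discb b nu1 nu2)) 0 0 = 4 * b * c * (q - 1)).
  { rewrite DJJ. unfold q. field. split; auto. }
  assert (PROD : dj (dj (discb b nu1 nu2)) 0 0 * dt (discb b nu1 nu2) 0 0
                 = - 16 * (b * b) * (q - 1) * (c * d)).
  { rewrite KEY, DT. ring. }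
  assert (bb : b * b > 0) by nra.
  assert (cd : c * d <> 0) by (intro E; apply Rmult_integral in E; tauto).
  split; [|split].
  - intros Hq. assert (Hn : dj (dj (discb b nu1 nu2)) 0 0 <> 0).
    { rewrite KEY. intro E. apply Rmult_integral in E as [E|E]; [|lra].
      apply Rmult_integral in E as [E|E]; [|tauto]. lra. }
    assert (Ht : dt (discb b nu1 nu2) 0 0 <> 0).
    { rewrite DT. intro E. apply Rmult_integral in E as [E|E]; [|tauto]. lra. }
    assert (X : b*b*(1-q) > 0) by (apply Rmult_lt_0_compat; lra).
    destruct (Rdichotomy _ _ cd) as [N|P].
    + left. unfold concave_up, concave_down, saddle_node. split; split; [repeat split; auto|exact N|repeat split; auto|rewrite PROD; replace (-16 * (b * b) * (q - 1) * (c * d)) with (16 * (b*b*(1-q)) * (c*d)) by ring; nra].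
    + right. unfold concave_up, concave_down, saddle_node. split; split; [repeat split; auto|exact P|repeat split; auto|rewrite PROD; replace (-16 * (b * b) * (q - 1) * (c * d)) with (16 * (b*b*(1-q)) * (c*d)) by ring; nra].
  - intros Hq. assert (Hn : dj (dj (discb b nu1 nu2)) 0 0 <> 0).
    { rewrite KEY. intro E. apply Rmult_integral in E as [E|E]; [|lra].
      apply Rmult_integral in E as [E|E]; [|tauto]. lra. }
    assert (Ht : dt (discb b nu1 nu2) 0 0 <> 0).
    { rewrite DT. intro E. apply Rmult_integral in E as [E|E]; [|tauto]. lra. }
    assert (X : b*b*(q-1) > 0) by (apply Rmult_lt_0_compat; lra).
    destruct (Rdichotomy _ _ cd) as [N|P].
    + left. unfold concave_up, concave_down, saddle_node. split; split; [repeat split; auto|exact N|repeat split; auto|rewrite PROD; replace (-16 * (b * b) * (q - 1) * (c * d)) with (-16 * (b*b*(q-1)) * (c*d)) by ring; nra].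
    + right. unfold concave_up, concave_down, saddle_node. split; split; [repeat split; auto|exact P|repeat split; auto|rewrite PROD; replace (-16 * (b * b) * (q - 1) * (c * d)) with (-16 * (b*b*(q-1)) * (c*d)) by ring; nra].
  - intros Hq. rewrite KEY, Hq. ring.
Qed.
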